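(* Let $p_1,\dots,p_n$ be distinct primes and $G=C_{p_1\cdots p_n}$ the cyclic group of order $p_1\cdots p_n$. Then the width of $G$ equals $n$.
   Context: For a finite group $G$, an arrow is a pair $(H,K)$ of subgroups with $H\leqslant K$; identity arrows are those with $H=K$. A $G$-transfer system is a set of arrows containing all identities and closed under composition ($(H,K),(K,L)\Rightarrow(H,L)$), conjugation ($(H,K)\Rightarrow(gHg^{-1},gKg^{-1})$) and restriction ($(H,K)$ and $L\leqslant K\Rightarrow(H\cap L,L)$). For a set $S$ of non-identity arrows, $\langle S\rangle$ is the smallest transfer system containing $S$. A minimal generating set of a transfer system $\mathsf{T}$ is a set $S\subseteq\mathsf{T}$ of non-identity arrows with $\langle S\rangle=\mathsf{T}$ and $\langle S\setminus\{s\}\rangle\neq\mathsf{T}$ for all $s\in S$; all such sets have the same cardinality $\mathfrak{m}(\mathsf{T})$. The width of $G$ is $\mathfrak{m}$ of the complete transfer system (the transfer system consisting of all arrows). *)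

(* Defs.v *)
From mathcomp Require Import all_boot all_fingroup all_solvable.
Set Implicit Arguments. Unset Strict Implicit. Unset Printing Implicit Defensive.
Local Open Scope group_scope.

Section TransferSystems.
Variable gT : finGroupType.

Definition arrow_t := ({set gT} * {set gT})%type.

Definition is_subgroup (G H : {set gT}) : bool := group_set H && (H \subset G).

Definition is_arrow (G : {set gT}) (a : arrow_t) : bool :=
  [&& is_subgroup G a.1, is_subgroup G a.2 & a.1 \subset a.2].

Definition transfer_system (G : {set gT}) (T : {set arrow_t}) : bool :=
  [&& [forall a in T, is_arrow G a],
      [forall H : {set gT}, is_subgroup G H ==> ((H, H) \in T)],
      [forall a in T, forall b in T, (a.2 == b.1) ==> ((a.1, b.2) \in T)],
      [forall a in T, forall g in G, (a.1 :^ g, a.2 :^ g) \in T] &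
      [forall a in T, forall L : {set gT},
         (is_subgroup G L && (L \subset a.2)) ==> ((a.1 :&: L, L) \in T)]].

Definition gen_ts (G : {set gT}) (S : {set arrow_t}) : {set arrow_t} :=
  [set a | [forall T : {set arrow_t},
              (transfer_system G T && (S \subset T)) ==> (a \in T)]].

Definition complete_ts (G : {set gT}) : {set arrow_t} := [set a | is_arrow G a].

Definition minimal_gen_set (G : {set gT}) (S T : {set arrow_t}) : Prop :=
  [/\ S \subset T,
      (forall a, a \in S -> a.1 != a.2),
      gen_ts G S = T &
      (forall s, s \in S -> gen_ts G (S :\ s) != T)].

Definition mgen_card (G : {set gT}) (T : {set arrow_t}) (m : nat) : Prop :=
  (exists S, minimal_gen_set G S T) /\
  (forall S, minimal_gen_set G S T -> #|S| = m).

Definition width_is (G : {set gT}) (m : nat) : Prop :=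
  mgen_card G (complete_ts G) m.

End TransferSystems.

(* Main.v *)
Require Import Defs.
From mathcomp Require Import all_boot all_fingroup all_solvable.
Set Implicit Arguments. Unset Strict Implicit. Unset Printing Implicit Defensive.
Local Open Scope group_scope.

Lemma tsg_sub (gT : finGroupType) (G : {set gT}) (S T : {set arrow_t gT}) :
  transfer_system G T -> S \subset T -> gen_ts G S \subset T.
Proof.
move=> tsT sST; apply/subsetP=> a; rewrite inE => /forallP /(_ T).
by rewrite tsT sST; apply.
Qed.

Lemma tsg_subgen (gT : finGroupType) (G : {set gT}) (S : {set arrow_t gT}) : S \subset gen_ts G S.
Proof.
apply/subsetP=> a aS; rewrite inE; apply/forallP=> T; apply/implyP=> /andP[_ sST].
exact: subsetP sST a aS.
Qed.

Lemma tsg_mono (gT : finGroupType) (G : {set gT}) (S1 S2 : {set arrow_t gT}) :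
  S1 \subset S2 -> gen_ts G S1 \subset gen_ts G S2.
Proof.
move=> s12; apply/subsetP=> a; rewrite !inE => /forallP h; apply/forallP=> T.
apply/implyP=> /andP[tsT s2T]; apply: (implyP (h T)).
by rewrite tsT (subset_trans s12 s2T).
Qed.

Lemma conj_ab (gT : finGroupType) (G : {group gT}) (H : {set gT}) g :
  abelian G -> H \subset G -> g \in G -> H :^ g = H.
Proof.
move=> abG sHG gG; apply/normP; apply: (subsetP (cent_sub H)).
exact: (subsetP (centS sHG)) (subsetP abG g gG).
Qed.

Lemma ts_del (gT : finGroupType) (G : {group gT}) (a0 : arrow_t gT) : abelian G ->
  a0.1 != a0.2 ->
  (forall H K L, is_arrow G (H,K) -> is_arrow G (K,L) -> (H,L) = a0 ->
     (H,K) = a0 \/ (K,L) = a0) ->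
  (forall H K L, is_arrow G (H,K) -> is_subgroup G L -> L \subset K ->
     (H :&: L, L) = a0 -> (H,K) = a0) ->
  transfer_system G (complete_ts G :\ a0).
Proof.
move=> abG na0 hc hr; apply/and5P; split.
- by apply/forallP=> a; apply/implyP; rewrite !inE => /andP[_ ->].
- apply/forallP=> H; apply/implyP=> sH; rewrite !inE /is_arrow /= sH subxx andbT.
  by rewrite andbT; apply/eqP=> e; rewrite -e eqxx in na0.
- apply/forallP=> -[H K]; apply/implyP; rewrite !inE => /andP[na aA].
  apply/forallP=> -[K' L]; apply/implyP; rewrite !inE => /andP[nb bA].
  apply/implyP=> /eqP /= eK; subst K'.
  move: (aA) (bA); rewrite /is_arrow /= => /and3P[sH sK sHK] /and3P[_ sL sKL].
  rewrite sH sL (subset_trans sHK sKL) !andbT.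
  apply/eqP=> e; case: (hc _ _ _ aA bA e) => e'.
    by rewrite e' eqxx in na.
  by rewrite e' eqxx in nb.
- apply/forallP=> -[H K]; apply/implyP=> aT; apply/forallP=> g; apply/implyP=> gG.
  move: (aT); rewrite !inE /is_arrow /is_subgroup /= => /andP[_ /and3P[/andP[_ sHG] /andP[_ sKG] _]].
  by rewrite !(conj_ab abG) //; move: aT; rewrite !inE.
- apply/forallP=> -[H K]; apply/implyP; rewrite !inE => /andP[na aA].
  apply/forallP=> L; apply/implyP=> /andP[sL sLK] /=.
  move: (aA) (sL); rewrite /is_arrow /is_subgroup /= => /and3P[/andP[gH sHG] sK sHK] /andP[gL sLG].
  rewrite in_setD1 inE /is_arrow /is_subgroup /= gL sLG subsetIr !andbT.
  rewrite (subset_trans (subsetIr _ _) sLG) andbT.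
  apply/andP; split.
  + apply/eqP=> e; have := hr _ _ _ aA sL sLK e => e'; by rewrite e' eqxx in na.
  + exact: (@group_setI _ (Group gH) (Group gL)).
Qed.

Lemma complete_is_ts (gT : finGroupType) (G : {group gT}) :
  abelian G -> transfer_system G (complete_ts G).
Proof.
move=> abG.
have nA : (set0, [set: gT]) \notin complete_ts G.
  by rewrite inE /is_arrow /is_subgroup /= /group_set in_set0.
have -> : complete_ts G = complete_ts G :\ (set0, [set: gT]).
  apply/setP=> a; rewrite in_setD1; case: eqP => // ->; exact: negbTE.
apply: ts_del => //=.
- apply/eqP=> e; have := in_setT (1 : gT); by rewrite -e in_set0.
- move=> H K L; rewrite /is_arrow /is_subgroup /= => /and3P[/andP[gH _] _ _] _ [eH _].
  by move: gH; rewrite eH /group_set in_set0.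
- move=> H K L; rewrite /is_arrow /is_subgroup /= => /and3P[/andP[gH _] _ _] /andP[gL _] _ [eH _].
  have := @group_setI _ (Group gH) (Group gL); rewrite /= eH.
  by rewrite /group_set in_set0.
Qed.
Local Close Scope group_scope.


Theorem lemma5p1 (n : nat) (p : 'I_n -> nat)
  (p_prime : forall i, prime (p i)) (p_distinct : injective p)
  (gT : finGroupType) (G : {group gT})
  (G_cyclic : cyclic G) (G_order : #|G| = \prod_(i < n) p i) :
  width_is G n.
Proof.
have abG := cyclic_abelian G_cyclic.
case/cyclicP: G_cyclic => x defG.
set N := #|G|.
have N_gt0 : 0 < N := cardG_gt0 G.
have ox : #[x]%g = N by rewrite /N defG.
have p_dvd i : p i %| N by rewrite /N G_order (bigD1 i) //= dvdn_mulr.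
pose M i := cycle_group (x ^+ p i)%g.
have cardM i : #|M i| = N %/ p i.
  by rewrite -[#|_|]/(#[x ^+ p i]%g) orderXdiv ?ox.
have sMG i : M i \subset G by rewrite defG cycleX.
have sqf i m : p i %| m -> m %| N %/ p i -> False.
  move=> h1 h2; have : p i %| N %/ p i := dvdn_trans h1 h2.
  rewrite /N G_order (bigD1 i) //= mulKn ?prime_gt0 //.
  rewrite (Euclid_dvd_prod _ _ _ (p_prime i)) big_has_cond => /hasP[j _ /andP[/= nji]].
  rewrite dvdn_prime2 // => /eqP /p_distinct eij.
  by rewrite eij eqxx in nji.
have pq q : prime q -> q %| N -> exists i, q = p i.
  move=> qP; rewrite /N G_order (Euclid_dvd_prod _ _ _ qP) big_has_cond.
  case/hasP=> j _ /andP[_ /=]; rewrite dvdn_prime2 // => /eqP ->; by exists j.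
have subc (H : {group gT}) : H \subset G -> (H : {set gT}) = cycle (x ^+ (N %/ #|H|))%g.
  move=> sHG; have sHx : H \subset cycle x by rewrite -defG.
  have := cycle_sub_group (cardSg sHx); move/setP/(_ H); rewrite !inE sHx eqxx /=.
  move/esym/eqP => eH; rewrite -ox {1}eH //.
pose f i := ((M i : {set gT}), (G : {set gT})).
pose Max := f @: [set: 'I_n].
have MaxC : Max \subset complete_ts G.
  apply/subsetP=> a /imsetP[i _ ->].
  by rewrite inE /is_arrow /is_subgroup /= !groupP sMG subxx.
have fC i : f i \in complete_ts G by apply: (subsetP MaxC); apply: imset_f; rewrite inE.
have Mpos i : 0 < N %/ p i by rewrite -cardM cardG_gt0.
have na0 i : (f i).1 != (f i).2.
  apply/eqP=> /= e; have cG : N = N %/ p i by rewrite -(cardM i) /N -e.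
  have := divnK (p_dvd i); rewrite -cG => h.
  move/eqP: h; rewrite -{2}[N]muln1 eqn_pmul2l // => /eqP pi1.
  by have := prime_gt1 (p_prime i); rewrite pi1.
have between i (K : {set gT}) : group_set K -> M i \subset K -> K \subset G ->
    K = M i \/ K = G.
  move=> gK sMK sKG.
  have d1 : #|M i| %| #|K| := cardSg (G := Group gK) sMK.
  have d2 : #|K| %| N := cardSg (G := G) (H := Group gK) sKG.
  rewrite cardM in d1; case/dvdnP: d1 => t eK.
  have e2 : N = p i * (N %/ p i) by rewrite mulnC divnK.
  have td : t %| p i.
    by move: d2; rewrite eK {2}e2 dvdn_pmul2r.
  case/primeP: (p_prime i) => _ /(_ t td) /orP[] /eqP et.
    left; apply/esym/eqP; rewrite eqEcard sMK /= eK et mul1n cardM leqnn //.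
  right; apply/eqP; rewrite eqEcard sKG /= eK et -e2 leqnn //.
have needed S : gen_ts G S = complete_ts G -> forall i, f i \in S.
  move=> gS i; apply/negPn/negP => nS.
  have ts : transfer_system G (complete_ts G :\ f i).
    apply: ts_del => //.
    - move=> H K L; rewrite /is_arrow /is_subgroup /=.
      move=> /and3P[/andP[gH sHG] /andP[gK sKG] sHK] /and3P[_ /andP[gL sLG] sKL] [eH eL].
      have sMK : M i \subset K by rewrite eH in sHK.
      case: (between i K gK sMK (subset_trans sKL sLG)) => eK.
        by right; rewrite eK eL.
      by left; rewrite eH eK.
    - move=> H K L; rewrite /is_arrow /is_subgroup /=.
      move=> /and3P[/andP[gH sHG] /andP[gK sKG] sHK] /andP[gL sLG] sLK [eHL eL].
      have eK : K = G by apply/eqP; rewrite eqEsubset sKG -eL sLK.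
      have eH : H = <[x ^+ p i]>%g by rewrite -eHL; apply/esym/setIidPl; rewrite eL.
      by rewrite eH eK.
  have sSD : S \subset complete_ts G :\ f i.
    apply/subsetP=> s sS; rewrite in_setD1 -gS (subsetP (tsg_subgen G S)) // andbT.
    by apply/eqP => e; rewrite -e sS in nS.
  have h := subsetP (tsg_sub ts sSD) (f i); rewrite gS in h.
  by move: (h (fC i)); rewrite in_setD1 eqxx.
have gen_all (T : {set arrow_t gT}) : transfer_system G T -> Max \subset T ->
    forall k (H K : {group gT}), #|K| <= k -> H \subset K -> K \subset G ->
    ((H : {set gT}), (K : {set gT})) \in T.
  move=> tsT sMT; case/and5P: (tsT) => _ t2 t3 _ t5.
  elim=> [|k IH] H K leK sHK sKG.
    by move: (cardG_gt0 K) leK; case: #|K|.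
  case: (eqVneq (H : {set gT}) K) => [-> | neHK].
    by apply: (implyP (forallP t2 K)); rewrite /is_subgroup groupP sKG.
  have ltHK : #|H| < #|K| by apply: proper_card; rewrite properEneq neHK sHK.
  have dHK := cardSg sHK; have dKN : #|K| %| N := cardSg sKG.
  set r := #|K| %/ #|H|.
  have r_gt1 : 1 < r by rewrite /r ltn_divRL // mul1n.
  have qP := pdiv_prime r_gt1.
  have qK : pdiv r %| #|K| := dvdn_trans (pdiv_dvd r) (dvdn_div dHK).
  have [i ei] := pq _ qP (dvdn_trans qK dKN).
  have qr : p i %| r by rewrite -ei pdiv_dvd.
  have MT : f i \in T by apply: (subsetP sMT); apply: imset_f; rewrite inE.
  have rT : ((M i :&: K), (K : {set gT})) \in T.
    have := forall_inP t5 _ MT; move/forallP/(_ K)/implyP; apply.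
    by rewrite /is_subgroup groupP sKG.
  have sHM : H \subset M i.
    rewrite (subc H (subset_trans sHK sKG)) /= cycle_subG.
    have : p i %| N %/ #|H|.
      have -> : N %/ #|H| = N %/ #|K| * r by rewrite /r muln_divA // divnK.
      exact: dvdn_mull.
    by case/dvdnP=> t ->; rewrite mulnC expgM groupX // cycle_id.
  have nKM : ~~ (K \subset M i).
    apply/negP=> sKM; apply: (sqf i #|K|); first by rewrite -ei.
    by have := cardSg sKM; rewrite cardM.
  have ltMK : #|M i :&: K| < #|K|.
    apply: proper_card; rewrite properEneq subsetIr andbT.
    by apply/eqP => e; move: nKM; rewrite -{1}e subsetIl.
  have IH' := IH H (M i :&: K)%G.
  have HT : ((H : {set gT}), (M i :&: K)) \in T.
    apply: IH'; first by rewrite -ltnS (leq_trans ltMK leK).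
      by rewrite subsetI sHM sHK.
    exact: subset_trans (subsetIr _ _) sKG.
  have := forall_inP (forall_inP t3 _ HT) _ rT; move/implyP; apply.
  by rewrite /= eqxx.
have gen_complete : gen_ts G Max = complete_ts G.
  apply/eqP; rewrite eqEsubset; apply/andP; split.
    by apply: tsg_sub => //; exact: complete_is_ts.
  apply/subsetP=> -[H K]; rewrite inE /is_arrow /is_subgroup /=.
  move=> /and3P[/andP[gH _] /andP[gK sKG] sHK].
  rewrite inE; apply/forallP=> T; apply/implyP=> /andP[tsT sMT].
  exact: (gen_all T tsT sMT #|K| (Group gH) (Group gK) (leqnn _) sHK sKG).
have cardMax : #|Max| = n.
  rewrite card_imset ?cardsT ?card_ord // => i j [e].
  have h : N %/ p i = N %/ p j by rewrite -!cardM /= e.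
  apply: p_distinct; have h1 := divnK (p_dvd i); have h2 := divnK (p_dvd j).
  rewrite -h in h2.
  by apply/eqP; rewrite -(eqn_pmul2l (Mpos i)) h1 h2.
split.
  exists Max; split => //.
  - by move=> a /imsetP[i _ ->]; exact: na0 i.
  - move=> s /imsetP[i _ ->]; apply/eqP => e.
    by have := needed _ e i; rewrite in_setD1 eqxx.
move=> S [sS _ gS minS].
have MS : Max \subset S by apply/subsetP=> a /imsetP[i _ ->]; exact: needed.
have SM : S \subset Max.
  apply/subsetP=> s sS'; apply/negPn/negP=> nsM; move: (minS s sS').
  move/eqP; apply; apply/eqP; rewrite eqEsubset; apply/andP; split.
    apply: tsg_sub; first exact: complete_is_ts.
    exact: subset_trans (subD1set S s) sS.
  rewrite -{1}gen_complete; apply: tsg_mono; apply/subsetP=> a aM.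
  rewrite in_setD1 (subsetP MS _ aM) andbT.
  by apply/eqP=> e; rewrite -e aM in nsM.
have -> : S = Max by apply/eqP; rewrite eqEsubset SM MS.
exact: cardMax.
Qed.
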